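(* Let $f:(0,\infty)\to\mathbb{R}$ be a convex function with $f(1)=0$, and assume that the function $g:(0,\infty)\to\mathbb{R}$ defined by $g(t)=-t f(t)$ is also convex. Let $P$ and $Q$ be two probability distributions on a finite set $\mathcal{A}$ that are positive on $\mathcal{A}$. Then $$\min_{x\in\mathcal{A}}\frac{P(x)}{Q(x)}\cdot D_f(P\|Q)\;\le\; -D_g(P\|Q)-f\bigl(1+\chi^2(P,Q)\bigr)\;\le\;\max_{x\in\mathcal{A}}\frac{P(x)}{Q(x)}\cdot D_f(P\|Q).$$
   Context: For a function $h:(0,\infty)\to\mathbb{R}$ and positive probability distributions $P,Q$ on a finite set $\mathcal{A}$, $D_h(P\|Q)=\sum_{x\in\mathcal{A}}Q(x)\,h\!\left(\frac{P(x)}{Q(x)}\right)$ (the $h$-divergence). The chi-squared divergence is $\chi^2(P,Q)=\sum_{x\in\mathcal{A}}\frac{(P(x)-Q(x))^2}{Q(x)}=\sum_{x\in\mathcal{A}}\frac{P(x)^2}{Q(x)}-1$. *)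

(* Defs.v *)
From HB Require Import structures.
From mathcomp Require Import all_boot all_order all_algebra.
Set Implicit Arguments. Unset Strict Implicit. Unset Printing Implicit Defensive.
Import Order.TTheory GRing.Theory Num.Theory.
Local Open Scope ring_scope.

Definition convex_pos (R : realFieldType) (h : R -> R) : Prop :=
  forall x y t : R, 0 < x -> 0 < y -> 0 <= t -> t <= 1 ->
    h (t * x + (1 - t) * y) <= t * h x + (1 - t) * h y.

Definition hdiv (R : realFieldType) (T : finType) (h : R -> R) (P Q : T -> R) : R :=
  \sum_(x : T) Q x * h (P x / Q x).

Definition chi2 (R : realFieldType) (T : finType) (P Q : T -> R) : R :=
  \sum_(x : T) (P x - Q x) ^+ 2 / Q x.

Definition pos_distr (R : realFieldType) (T : finType) (P : T -> R) : Prop :=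
  (forall x, 0 < P x) /\ \sum_(x : T) P x = 1.

(* min / max over the (nonempty) finite set of the ratio P/Q; x0 is any
   element of T, used only as seed of the iterated min/max. *)
Definition min_ratio (R : realFieldType) (T : finType) (x0 : T) (P Q : T -> R) : R :=
  \big[Num.min/(P x0 / Q x0)]_(x : T) (P x / Q x).
Definition max_ratio (R : realFieldType) (T : finType) (x0 : T) (P Q : T -> R) : R :=
  \big[Num.max/(P x0 / Q x0)]_(x : T) (P x / Q x).

(* Main.v *)
Require Import Defs.
From HB Require Import structures.
From mathcomp Require Import all_boot all_order all_algebra.
From mathcomp Require Import reals.
From mathcomp Require Import ring lra.
Import Order.TTheory GRing.Theory Num.Theory.
Local Open Scope ring_scope.

Section Aux.
Variable R : realFieldType.
Variable f : R -> R.
Hypothesis cf : convex_pos f.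

Lemma conv2 {a b x y : R} : 0 <= a -> 0 <= b -> 0 < a + b -> 0 < x -> 0 < y ->
  (a + b) * f ((a * x + b * y) / (a + b)) <= a * f x + b * f y.
Proof.
move=> a0 b0 ab x0 y0.
have nz := lt0r_neq0 ab.
have t0 : 0 <= a / (a + b) by rewrite divr_ge0 // ltW.
have t1 : a / (a + b) <= 1 by rewrite ler_pdivrMr // mul1r lerDl.
have := cf x y (a / (a + b)) x0 y0 t0 t1.
have -> : a / (a + b) * x + (1 - a / (a + b)) * y = (a * x + b * y) / (a + b)
  by field.
move=> h; apply: le_trans (ler_wpM2l (ltW ab) h) _.
have -> : (a + b) * (a / (a + b) * f x + (1 - a / (a + b)) * f y)
  = a * f x + b * f y by field.
by [].
Qed.

Variable T : Type.

Lemma sum0w {w : T -> R} (hw : forall i, 0 <= w i) s (F : T -> R) :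
  \sum_(i <- s) w i = 0 -> \sum_(i <- s) w i * F i = 0.
Proof.
elim: s => [|a s IH]; first by rewrite !big_nil.
rewrite !big_cons => /eqP; rewrite paddr_eq0 ?sumr_ge0 //.
by move=> /andP[/eqP -> /eqP /IH ->]; rewrite mul0r add0r.
Qed.

Lemma sumpos {w x : T -> R} (hw : forall i, 0 <= w i) (hx : forall i, 0 < x i) {s} :
  0 < \sum_(i <- s) w i -> 0 < \sum_(i <- s) w i * x i.
Proof.
move=> hS.
have ge : 0 <= \sum_(i <- s) w i * x i
  by apply: sumr_ge0 => i _; rewrite mulr_ge0 // ltW.
rewrite lt_neqAle ge andbT; apply/eqP => /esym H.
have := @sum0w (fun i => w i * x i) (fun i => mulr_ge0 (hw i) (ltW (hx i))) s
  (fun i => (x i)^-1) H.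
under eq_bigr => i _ do rewrite mulfK ?lt0r_neq0 //.
by move=> E; rewrite E ltxx in hS.
Qed.

Lemma jensen {w x : T -> R} (hw : forall i, 0 <= w i) (hx : forall i, 0 < x i) s :
  0 < \sum_(i <- s) w i ->
  (\sum_(i <- s) w i) * f ((\sum_(i <- s) w i * x i) / \sum_(i <- s) w i)
   <= \sum_(i <- s) w i * f (x i).
Proof.
elim: s => [|a s IH]; first by rewrite big_nil ltxx.
rewrite !big_cons => hS.
have : 0 <= \sum_(i <- s) w i by apply: sumr_ge0.
rewrite le_eqVlt => /orP[/eqP S0 | Spos].
  rewrite -S0 !sum0w // ?(esym S0) // !addr0 in hS *.
  by rewrite mulrAC divff ?mul1r // lt0r_neq0.
have y0 := sumpos hw hx Spos.
have := conv2 (hw a) (ltW Spos) hS (hx a) (divr_gt0 y0 Spos).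
rewrite [_ * (_ / _)]mulrC divfK ?lt0r_neq0 // => h.
apply: le_trans h _; rewrite lerD2l; exact: IH.
Qed.

Lemma mono {u w x : T -> R} (hw : forall i, 0 <= w i) (hd : forall i, w i <= u i)
  (hx : forall i, 0 < x i) s :
  0 < \sum_(i <- s) w i ->
  \sum_(i <- s) w i * f (x i)
    - (\sum_(i <- s) w i) * f ((\sum_(i <- s) w i * x i) / \sum_(i <- s) w i)
  <= \sum_(i <- s) u i * f (x i)
    - (\sum_(i <- s) u i) * f ((\sum_(i <- s) u i * x i) / \sum_(i <- s) u i).
Proof.
move=> hW.
have hdd : forall i, 0 <= u i - w i by move=> i; rewrite subr_ge0.
have split F : \sum_(i <- s) u i * F i
   = \sum_(i <- s) (u i - w i) * F i + \sum_(i <- s) w i * F i.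
  by rewrite -big_split; apply: eq_bigr => i _ /=; ring.
have splitU : \sum_(i <- s) u i
   = \sum_(i <- s) (u i - w i) + \sum_(i <- s) w i.
  by rewrite -big_split; apply: eq_bigr => i _ /=; ring.
rewrite !split splitU.
have : 0 <= \sum_(i <- s) (u i - w i) by apply: sumr_ge0.
rewrite le_eqVlt => /orP[/eqP D0 | Dpos].
  rewrite (sum0w hdd s x (esym D0)) (sum0w hdd s (fun i => f (x i)) (esym D0)).
  by rewrite -D0 !add0r.

set D := \sum_(i <- s) (u i - w i).
set W := \sum_(i <- s) w i.
set Dx := \sum_(i <- s) (u i - w i) * x i.
set Wx := \sum_(i <- s) w i * x i.
set Df := \sum_(i <- s) (u i - w i) * f (x i).
set Wf := \sum_(i <- s) w i * f (x i).
have hJ : D * f (Dx / D) <= Df by exact: (jensen hdd hx s Dpos).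
have dx0 : 0 < Dx by apply: sumpos.
have wx0 : 0 < Wx by apply: sumpos.
have := conv2 (ltW Dpos) (ltW hW) (addr_gt0 Dpos hW) (divr_gt0 dx0 Dpos)
  (divr_gt0 wx0 hW).
rewrite [D * (_ / _)]mulrC [W * (_ / _)]mulrC !divfK ?lt0r_neq0 // => h.
rewrite -/D -/W in h. lra.
Qed.

End Aux.

Theorem proposition5 (R : realType) (T : finType) (x0 : T)
  (f : R -> R) (P Q : T -> R) :
  convex_pos f -> f 1 = 0 ->
  convex_pos (fun t => - (t * f t)) ->
  pos_distr P -> pos_distr Q ->
  min_ratio x0 P Q * hdiv f P Q
    <= - hdiv (fun t => - (t * f t)) P Q - f (1 + chi2 P Q)
  /\
  - hdiv (fun t => - (t * f t)) P Q - f (1 + chi2 P Q)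
    <= max_ratio x0 P Q * hdiv f P Q.
Proof.
move=> cf f1 _ [Pp P1] [Qp Q1].
set r := fun i => P i / Q i.
have rp : forall i, 0 < r i by move=> i; rewrite divr_gt0.
have QrP : forall i, Q i * r i = P i.
  by move=> i; rewrite /r mulrC divfK ?lt0r_neq0.
set m := min_ratio x0 P Q.
set M := max_ratio x0 P Q.
have mle : forall i, m <= r i.
  by move=> i; rewrite /m /min_ratio (bigD1 i) //= ge_min lexx.
have Mge : forall i, r i <= M.
  by move=> i; rewrite /M /max_ratio (bigD1 i) //= le_max lexx.
have mpos : 0 < m.
  rewrite /m /min_ratio; apply: (big_ind (fun v => 0 < v)); first exact: rp.
    by move=> a b ha hb; rewrite lt_min ha hb.
  by move=> i _; exact: rp.
have Mpos : 0 < M := lt_le_trans (rp x0) (Mge x0).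
have mid : - hdiv (fun t => - (t * f t)) P Q
           = \sum_(i <- index_enum T) P i * f (r i).
  rewrite /hdiv -sumrN; apply: eq_bigr => i _.
  by rewrite -/(r i) -(QrP i); ring.
have chi : 1 + chi2 P Q = \sum_(i <- index_enum T) P i * r i.
  rewrite /chi2.
  have -> : \sum_(x : T) (P x - Q x) ^+ 2 / Q x
      = \sum_(i <- index_enum T) (P i * r i - (2 * P i - Q i)).
    apply: eq_bigr => i _; rewrite /r; field; exact: lt0r_neq0.
  rewrite sumrB big_split /= sumrN -mulr_sumr.
  change (\sum_(i <- index_enum T) P i) with (\sum_(x : T) P x).
  change (\sum_(i <- index_enum T) Q i) with (\sum_(x : T) Q x).
  rewrite P1 Q1; ring.
have P1' : \sum_(i <- index_enum T) P i = 1 by exact: P1.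
have Df : forall c, \sum_(i <- index_enum T) c * Q i * f (r i) = c * hdiv f P Q.
  by move=> c; rewrite /hdiv mulr_sumr; apply: eq_bigr => i _; rewrite mulrA.
have Sc : forall c, \sum_(i <- index_enum T) c * Q i = c.
  by move=> c; rewrite -mulr_sumr; rewrite [X in c * X]Q1 mulr1.
have Scx : forall c, \sum_(i <- index_enum T) c * Q i * r i = c.
  move=> c; under eq_bigr => i _ do rewrite -mulrA QrP.
  by rewrite -mulr_sumr P1' mulr1.
rewrite mid chi; split.
- have := @mono R f cf T P (fun i => m * Q i) r
    (fun i => mulr_ge0 (ltW mpos) (ltW (Qp i))) _ rp (index_enum T).
  rewrite Df Sc Scx P1' divff ?lt0r_neq0 // f1 mulr0 subr0 !divr1 mul1r.
  apply => //; move=> i; have := mle i.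
  by rewrite /r ler_pdivlMr // mulrC.
- have := @mono R f cf T (fun i => M * Q i) P r (fun i => ltW (Pp i)) _ rp
    (index_enum T).
  rewrite Df Sc Scx P1' divff ?lt0r_neq0 // f1 mulr0 subr0 !divr1 mul1r.
  apply => //; move=> i; have := Mge i.
  by rewrite /r ler_pdivrMr // mulrC.
Qed.
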